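(* For every constant $\delta>0$ there exists an instance of correlation clustering on a complete bipartite graph for which the ratio between the minimum cost of a clustering and the optimal value of the LP relaxation is at least $3-\delta$.
   Context: Complete bipartite correlation clustering: $V=V_1\cup V_2$ (disjoint); each pair in $V_1\times V_2$ is a positive edge ($E^+$) or negative edge ($E^-$); pairs inside $V_1$ or inside $V_2$ are not edges. The cost of a clustering (partition of $V$) is the number of positive edges with endpoints in different clusters plus the number of negative edges with endpoints in the same cluster. LP relaxation: variables $x_{uv}=x_{vu}\in[0,1]$ for all $u,v\in V$, $x_{uu}=0$, $x_{uv}+x_{vw}\ge x_{uw}$ for all $u,v,w\in V$; minimize $\sum_{E^+}x_{uv}+\sum_{E^-}(1-x_{uv})$. The integrality gap of an instance is the minimum clustering cost divided by the LP optimum. *)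

(* Defs.v *)
From HB Require Import structures.
From mathcomp Require Import all_boot all_order all_algebra.
From mathcomp Require Import reals.
Set Implicit Arguments. Unset Strict Implicit. Unset Printing Implicit Defensive.
Import Order.TTheory GRing.Theory Num.Theory.
Local Open Scope ring_scope.

(* A complete bipartite instance: V1 = 'I_n1, V2 = 'I_n2, V = V1 + V2 (disjoint).
   sgn i j = true  : (i,j) is a positive edge (E+),
   sgn i j = false : (i,j) is a negative edge (E-). *)
Definition vert (n1 n2 : nat) : finType := ('I_n1 + 'I_n2)%type.

(* A clustering (partition of V) is given by a labelling c : V -> nat;
   u, v are in the same cluster iff c u = c v.  Every partition arises so. *)
Definition clust_cost (n1 n2 : nat) (sgn : 'I_n1 -> 'I_n2 -> bool)
    (c : vert n1 n2 -> nat) : nat :=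
  (\sum_(i < n1) \sum_(j < n2)
     (if sgn i j then c (inl i) != c (inr j) else c (inl i) == c (inr j)))%N.

Definition lp_feasible (R : realType) (n1 n2 : nat)
    (x : vert n1 n2 -> vert n1 n2 -> R) : Prop :=
  [/\ forall u v, 0 <= x u v <= 1,
      forall u v, x u v = x v u,
      forall u, x u u = 0
    & forall u v w, x u w <= x u v + x v w].

Definition lp_value (R : realType) (n1 n2 : nat) (sgn : 'I_n1 -> 'I_n2 -> bool)
    (x : vert n1 n2 -> vert n1 n2 -> R) : R :=
  \sum_(i < n1) \sum_(j < n2)
     (if sgn i j then x (inl i) (inr j) else 1 - x (inl i) (inr j)).

(* Main.v *)
Require Import Defs.
From HB Require Import structures.
From mathcomp Require Import all_boot all_order all_algebra.
From mathcomp Require Import reals.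
From mathcomp Require Import ring lra.
Set Implicit Arguments. Unset Strict Implicit. Unset Printing Implicit Defensive.
Import Order.TTheory GRing.Theory Num.Theory.
Local Open Scope ring_scope.

Section Abs.
Variables (R : realType) (n1 n2 : nat) (sgn : 'I_n1 -> 'I_n2 -> bool).

Definition xs (u v : vert n1 n2) : R :=
  match u, v with
  | inl i, inl i' => if i == i' then 0 else 2/3
  | inr j, inr j' => if j == j' then 0 else 2/3
  | inl i, inr j => if sgn i j then 1/3 else 1
  | inr j, inl i => if sgn i j then 1/3 else 1
  end.

Lemma xs_feas : lp_feasible xs.
Proof.
split.
  by move=> [i|j] [i1|j1] /=; case: ifP => _; apply/andP; split; lra.
  by move=> [i|j] [i1|j1] //=; rewrite eq_sym.
  by move=> [i|j] /=; rewrite eqxx.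
move=> [i|j] [i1|j1] [i2|j2] /=;
  repeat (let H := fresh "H" in case: ifP => H; try (move/eqP: H => H; subst; rewrite ?eqxx /=); try congruence); try lra;
  repeat match goal with H : is_true (_ == _) |- _ => move/eqP in H end; congruence.
Qed.

Variable d : nat.
Hypothesis Hreg1 : forall i, \sum_(j < n2) ((sgn i j)%:R : R) = d%:R.
Hypothesis Hreg2 : forall j, \sum_(i < n1) ((sgn i j)%:R : R) = d%:R.
Hypothesis HC4 : forall i i' j j', i != i' -> j != j' ->
  sgn i j -> sgn i' j -> sgn i j' -> sgn i' j' -> False.

Definition Aw i j : R := (sgn i j)%:R.
Definition nw (T : eqType) (a b : T) : R := (a != b)%:R.

Lemma Aw01 i j : Aw i j = 0 \/ Aw i j = 1.
Proof. by rewrite /Aw; case: (sgn i j); [right|left]. Qed.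

Lemma nw01 (T : eqType) (a b : T) : nw a b = 0 \/ nw a b = 1.
Proof. by rewrite /nw; case: (a != b); [right|left]. Qed.

Lemma sumA1 i j : \sum_(j' < n2) Aw i j' * nw j' j = d%:R - Aw i j.
Proof.
rewrite -(Hreg1 i) (bigD1 j) //= [in RHS](bigD1 j) //= /nw eqxx mulr0 add0r.
rewrite addrC addrK; apply: eq_bigr => k /negbTE hk.
by rewrite hk mulr1.
Qed.

Lemma sumA2 i j : \sum_(i' < n1) Aw i' j * nw i' i = d%:R - Aw i j.
Proof.
rewrite -(Hreg2 j) (bigD1 i) //= [in RHS](bigD1 i) //= /nw eqxx mulr0 add0r.
rewrite addrC addrK; apply: eq_bigr => k /negbTE hk.
by rewrite hk mulr1.
Qed.

Lemma AwdA i j : Aw i j * (d%:R - Aw i j) = Aw i j * (d%:R - 1).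
Proof. by case: (Aw01 i j) => ->; ring. Qed.

Definition sum4 (f : 'I_n1 -> 'I_n2 -> 'I_n1 -> 'I_n2 -> R) : R :=
  \sum_(i' < n1) \sum_(j < n2) \sum_(i < n1) \sum_(j' < n2) f i' j i j'.

Lemma sum4D f g : sum4 (fun a b c e => f a b c e + g a b c e) = sum4 f + sum4 g.
Proof.
rewrite /sum4 -big_split; apply: eq_bigr => a _.
rewrite -big_split; apply: eq_bigr => b _.
rewrite -big_split; apply: eq_bigr => c _.
by rewrite -big_split.
Qed.

Lemma sum4_le f g : (forall a b c e, f a b c e <= g a b c e) -> sum4 f <= sum4 g.
Proof.
move=> H; rewrite /sum4; apply: ler_sum => a _; apply: ler_sum => b _.
by apply: ler_sum => c _; apply: ler_sum => e _.
Qed.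

Lemma sum4_perm f : sum4 f =
  \sum_(i < n1) \sum_(j' < n2) \sum_(i' < n1) \sum_(j < n2) f i' j i j'.
Proof.
rewrite /sum4.
under eq_bigr => ? _ do rewrite exchange_big.
rewrite exchange_big; apply: eq_bigr => i _.
under eq_bigr => ? _ do rewrite exchange_big.
by rewrite exchange_big.
Qed.

Definition ind i' j i j' : R := Aw i' j * (Aw i j * nw i i') * (Aw i' j' * nw j' j).

Lemma ind_ge0 a b c e : 0 <= ind a b c e.
Proof.
rewrite /ind; case: (Aw01 a b) => ->; case: (Aw01 c b) => ->;
case: (Aw01 a e) => ->; case: (nw01 c a) => ->; case: (nw01 e b) => ->; lra.
Qed.

Lemma sum_ind : sum4 ind = (n1 * d)%:R * (d%:R - 1) ^+ 2.
Proof.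
rewrite /sum4.
transitivity (\sum_(i' < n1) \sum_(j < n2) Aw i' j * (d%:R - 1) ^+ 2).
  apply: eq_bigr => a _; apply: eq_bigr => b _.
  under eq_bigr => c _ do rewrite /ind -mulr_sumr sumA1 mulrAC.
  rewrite -mulr_sumr sumA2.
  by case: (Aw01 a b) => ->; ring.
under eq_bigr => a _ do rewrite -mulr_suml.
have E : forall a, \sum_(i < n2) Aw a i = d%:R by move=> a; exact: Hreg1.
under eq_bigr => a _ do rewrite E.
by rewrite sumr_const card_ord -[_ *+ n1]mulr_natl natrM; ring.
Qed.


Lemma nwC (T : eqType) (a b : T) : nw a b = nw b a.
Proof. by rewrite /nw eq_sym. Qed.

Lemma sum_ind_in a b : \sum_(c < n1) \sum_(e < n2) ind a b c e = Aw a b * (d%:R - 1) ^+ 2.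
Proof.
under eq_bigr => c _ do rewrite /ind -mulr_sumr sumA1 mulrAC.
rewrite -mulr_sumr sumA2.
by case: (Aw01 a b) => ->; ring.
Qed.

Definition PY (Y : 'I_n1 -> 'I_n2 -> R) := \sum_(i < n1) \sum_(j < n2) Aw i j * Y i j.
Definition QY (Y : 'I_n1 -> 'I_n2 -> R) :=
  \sum_(i < n1) \sum_(j < n2) (1 - Aw i j) * (1 - Y i j).

Lemma T2 Y : sum4 (fun a b c e => ind a b c e * Y a b) = (d%:R - 1) ^+ 2 * PY Y.
Proof.
rewrite /sum4 /PY mulr_sumr; apply: eq_bigr => a _; rewrite mulr_sumr.
apply: eq_bigr => b _.
under eq_bigr => c _ do rewrite -mulr_suml.
by rewrite -mulr_suml sum_ind_in; ring.
Qed.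

Lemma T1 Y : sum4 (fun a b c e => ind a b c e * Y c b) = (d%:R - 1) ^+ 2 * PY Y.
Proof.
rewrite /sum4 /PY.
transitivity (\sum_(a < n1) \sum_(b < n2) \sum_(c < n1)
   (Aw a b * nw a c) * (Aw c b * Y c b * (d%:R - 1))).
  apply: eq_bigr => a _; apply: eq_bigr => b _; apply: eq_bigr => c _.
  rewrite -mulr_suml /ind -mulr_sumr sumA1 (nwC c a).
  by case: (Aw01 a b) => ->; ring.
under eq_bigr => a _ do rewrite exchange_big.
rewrite exchange_big.
under eq_bigr => c _ do rewrite exchange_big.
rewrite mulr_sumr; apply: eq_bigr => c _; rewrite mulr_sumr; apply: eq_bigr => b _.
rewrite -mulr_suml sumA2.
by case: (Aw01 c b) => ->; ring.
Qed.

Lemma T3 Y : sum4 (fun a b c e => ind a b c e * Y a e) = (d%:R - 1) ^+ 2 * PY Y.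
Proof.
rewrite /sum4 /PY.
transitivity (\sum_(a < n1) \sum_(b < n2) \sum_(e < n2)
   (Aw a b * nw b e) * (Aw a e * Y a e * (d%:R - 1))).
  apply: eq_bigr => a _; apply: eq_bigr => b _; rewrite exchange_big.
  apply: eq_bigr => e _.
  transitivity (\sum_(c < n1) (Aw c b * nw c a) * (Aw a b * (Aw a e * nw e b) * Y a e)).
    by apply: eq_bigr => c _; rewrite /ind; ring.
  rewrite -mulr_suml sumA2 (nwC e b).
  by case: (Aw01 a b) => ->; ring.
under eq_bigr => a _ do rewrite exchange_big.
rewrite mulr_sumr; apply: eq_bigr => a _; rewrite mulr_sumr; apply: eq_bigr => e _.
rewrite -mulr_suml sumA1.
by case: (Aw01 a e) => ->; ring.
Qed.

Lemma ind_neg a b c e : ind a b c e * Aw c e = 0.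
Proof.
rewrite /ind /Aw /nw.
case Hab: (sgn a b); case Hcb: (sgn c b); case Hca: (c != a);
case Hae: (sgn a e); case Heb: (e != b); case Hce: (sgn c e); rewrite /=; try ring.
exfalso; apply: (HC4 (i:=c) (i':=a) (j:=b) (j':=e)) => //.
by rewrite eq_sym Heb.
Qed.

Lemma ind_le a b c e : ind a b c e <= Aw c b * (Aw a b * (Aw a e * nw e b)).
Proof.
rewrite /ind; case: (Aw01 a b) => ->; case: (Aw01 c b) => ->;
case: (Aw01 a e) => ->; case: (nw01 c a) => ->; case: (nw01 e b) => ->; lra.
Qed.

Lemma inner_le1 b e : \sum_(a < n1) Aw a b * (Aw a e * nw e b) <= 1.
Proof.
case: (pickP (fun a => sgn a b && sgn a e && (e != b))) => [a0 /andP[/andP[H1 H2] H3] | none].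
  rewrite (bigD1 a0) //= big1.
    by rewrite /Aw /nw H1 H2 H3 /= !mulr1 addr0.
  move=> a Ha; rewrite /Aw /nw.
  case E1: (sgn a b); case E2: (sgn a e); case E3: (e != b); rewrite /=; try ring.
  exfalso; apply: (HC4 (i:=a) (i':=a0) (j:=b) (j':=e)) => //.
  by rewrite eq_sym.
rewrite big1 ?ler01 // => a _.
have := none a; rewrite /Aw /nw.
by case: (sgn a b); case: (sgn a e); case: (e != b) => //= _; ring.
Qed.

Lemma count_le c e : \sum_(a < n1) \sum_(b < n2) ind a b c e <= d%:R.
Proof.
rewrite exchange_big -(Hreg1 c); apply: ler_sum => b _.
apply: le_trans (_ : \sum_(a < n1) Aw c b * (Aw a b * (Aw a e * nw e b)) <= _).
  by apply: ler_sum => a _; apply: ind_le.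
rewrite -mulr_sumr -/(Aw c b).
have := inner_le1 b e; case: (Aw01 c b) => ->; lra.
Qed.


Lemma T4 Y : (forall i j, Y i j <= 1) ->
  sum4 (fun a b c e => ind a b c e * (1 - Y c e)) <= d%:R * QY Y.
Proof.
move=> HY; rewrite sum4_perm /QY mulr_sumr; apply: ler_sum => c _.
rewrite mulr_sumr; apply: ler_sum => e _.
have Z0 : 0 <= (1 - Aw c e) * (1 - Y c e).
  by have := HY c e; case: (Aw01 c e) => ->; nra.
rewrite (eq_bigr (fun a => \sum_(b < n2) ind a b c e * ((1 - Aw c e) * (1 - Y c e)))); last first.
  move=> a _; apply: eq_bigr => b _.
  have := ind_neg a b c e; case: (Aw01 c e) => -> /=; first by move=> _; ring.
  by rewrite mulr1 => ->; ring.
under eq_bigr => a _ do rewrite -mulr_suml.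
rewrite -mulr_suml.
by apply: ler_wpM2r => //; apply: count_le.
Qed.

Lemma lp_lower (y : vert n1 n2 -> vert n1 n2 -> R) : (1 < d)%N ->
  lp_feasible y -> (n1 * d)%:R / 3 <= lp_value sgn y.
Proof.
move=> hd [Hb Hs H0 Ht].
pose Y i j := y (inl i) (inr j).
have HY1 : forall i j, Y i j <= 1 by move=> i j; case/andP: (Hb (inl i) (inr j)).
have HY0 : forall i j, 0 <= Y i j by move=> i j; case/andP: (Hb (inl i) (inr j)).
have Hpath : forall c b a e, Y c e <= Y c b + Y a b + Y a e.
  move=> c b a e; rewrite /Y.
  have h1 := Ht (inl c) (inr b) (inr e).
  have h2 := Ht (inr b) (inl a) (inr e).
  rewrite (Hs (inr b) (inl a)) in h2; lra.
have Hlp : lp_value sgn y = PY Y + QY Y.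
  rewrite /lp_value /PY /QY -big_split; apply: eq_bigr => i _.
  rewrite -big_split; apply: eq_bigr => j _.
  by rewrite /Y /Aw; case: (sgn i j) => /=; ring.
have HQ : 0 <= QY Y.
  apply: sumr_ge0 => i _; apply: sumr_ge0 => j _.
  by have := HY1 i j; case: (Aw01 i j) => ->; nra.
have Hlow : sum4 ind <= sum4 (fun a b c e =>
    ind a b c e * Y c b + ind a b c e * Y a b + ind a b c e * Y a e
    + ind a b c e * (1 - Y c e)).
  apply: sum4_le => a b c e.
  have := ind_ge0 a b c e; have := Hpath c b a e; nra.
rewrite !sum4D T1 T2 T3 sum_ind in Hlow.
have := T4 HY1.
rewrite Hlp.
have hd' : (2 <= d%:R :> R) by rewrite (ler_nat R 2 d).
have hk : 0 < (d%:R - 1 :> R) ^+ 2 by rewrite exprn_gt0 //; lra.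
move: hk Hlow; set k := (d%:R - 1) ^+ 2 => hk Hlow.
have hdk : d%:R <= 3 * k.
  rewrite /k; nra.
move=> h4.
have hm : 0 <= (3 * k - d%:R) * QY Y by apply: mulr_ge0 => //; lra.
have : k * (n1 * d)%:R <= k * (3 * (PY Y + QY Y)) by lra.
rewrite ler_pM2l // => h; lra.
Qed.

Lemma lp_xs : lp_value sgn xs = (n1 * d)%:R / 3.
Proof.
rewrite /lp_value.
transitivity (\sum_(i < n1) \sum_(j < n2) Aw i j / 3).
  apply: eq_bigr => i _; apply: eq_bigr => j _.
  by rewrite /= /Aw; case: (sgn i j) => /=; ring.
under eq_bigr => i _ do rewrite -mulr_suml.
have E : forall a, \sum_(i < n2) Aw a i = d%:R by move=> a; exact: Hreg1.
under eq_bigr => a _ do rewrite E.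
by rewrite sumr_const card_ord -[_ *+ n1]mulr_natl natrM; ring.
Qed.


Lemma real_step (K M : R) : 0 <= K -> K <= M -> (M = 0 \/ 1 <= M) ->
  2 * K - M <= 1 + 2 * ((K ^+ 2 - K) / M).
Proof.
move=> hK hKM [M0|M1].
  have K0 : K = 0 by lra.
  by rewrite M0 K0 invr0; lra.
have Mp : 0 < M by lra.
suff : 2 * K - M - 1 <= (K ^+ 2 - K) / M * 2 by lra.
rewrite -mulrA [_^-1 * 2]mulrC mulrA ler_pdivlMr //.
have := sqr_ge0 (M - K); have := sqr_ge0 (K - 1); nra.
Qed.

Lemma inner_le1' i i' : i != i' -> \sum_(j < n2) Aw i j * Aw i' j <= 1.
Proof.
move=> hii.
case: (pickP (fun j => sgn i j && sgn i' j)) => [j0 /andP[H1 H2] | none].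
  rewrite (bigD1 j0) //= big1.
    by rewrite /Aw H1 H2 /= !mulr1 addr0.
  move=> j Hj; rewrite /Aw.
  case E1: (sgn i j); case E2: (sgn i' j); rewrite /=; try ring.
  exfalso; apply: (HC4 (i:=i) (i':=i') (j:=j0) (j':=j)) => //.
  by rewrite eq_sym.
rewrite big1 ?ler01 // => j _.
have := none j; rewrite /Aw.
by case: (sgn i j); case: (sgn i' j) => //= _; ring.
Qed.

Section Clust.
Variable c : vert n1 n2 -> nat.
Definition ee i j : R := (c (inl i) == c (inr j))%:R.
Definition ff i j : R := ee i j * Aw i j.
Definition Kc j : R := \sum_(i < n1) ff i j.
Definition Mc j : R := \sum_(i < n1) ee i j.
Definition al i : R := \sum_(t < n1) (c (inl t) == c (inl i))%:R.

Lemma ee01 i j : ee i j = 0 \/ ee i j = 1.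
Proof. by rewrite /ee; case: (_ == _); [right|left]. Qed.

Lemma Kc_ge0 j : 0 <= Kc j.
Proof.
apply: sumr_ge0 => i _; rewrite /ff.
by case: (ee01 i j) => ->; case: (Aw01 i j) => ->; lra.
Qed.

Lemma Kc_le j : Kc j <= Mc j.
Proof.
apply: ler_sum => i _; rewrite /ff.
by case: (ee01 i j) => ->; case: (Aw01 i j) => ->; lra.
Qed.

Lemma Mc01 j : Mc j = 0 \/ 1 <= Mc j.
Proof.
rewrite /Mc /ee -natr_sum.
case: (\sum_(i < n1) _)%N => [|k]; [left|right] => //.
by rewrite ler1n.
Qed.

Lemma al_gt0 i : 0 < al i.
Proof.
rewrite /al (bigD1 i) //= eqxx /=.
have : 0 <= \sum_(t < n1 | t != i) ((c (inl t) == c (inl i)))%:R :> R.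
  by apply: sumr_ge0 => t _; apply: ler0n.
lra.
Qed.

Lemma sq_K j : Kc j ^+ 2 - Kc j =
  \sum_(i < n1) \sum_(i' < n1) ff i j * ff i' j * nw i i'.
Proof.
rewrite /Kc expr2 mulr_suml -sumrB; apply: eq_bigr => i _.
rewrite mulr_sumr (bigD1 i) //= [in RHS](bigD1 i) //= /nw eqxx mulr0 add0r.
rewrite addrAC.
have -> : ff i j * ff i j = ff i j.
  by rewrite /ff; case: (ee01 i j) => ->; case: (Aw01 i j) => ->; ring.
rewrite subrr add0r; apply: eq_bigr => k hk.
by rewrite eq_sym hk mulr1.
Qed.


Lemma Mc_al i j : c (inl i) = c (inr j) -> Mc j = al i.
Proof. by move=> H; rewrite /Mc /al /ee; apply: eq_bigr => t _; rewrite H. Qed.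

Lemma ffff_le i i' : nw i i' * \sum_(j < n2) ff i j * ff i' j
   <= (c (inl i') == c (inl i))%:R.
Proof.
rewrite /nw; case: eqP => [->|hne] /=; first by rewrite mul0r ler0n.
rewrite mul1r.
case: eqP => hc /=.
  apply: le_trans (inner_le1' (i:=i) (i':=i') _); last by apply/eqP.
  apply: ler_sum => j _; rewrite /ff.
  by case: (ee01 i j) => ->; case: (ee01 i' j) => ->; case: (Aw01 i j) => ->;
     case: (Aw01 i' j) => ->; lra.
rewrite big1 // => j _; rewrite /ff /ee.
case: eqP => h1; case: eqP => h2 /=; try ring.
by exfalso; apply: hc; rewrite h1 h2.
Qed.

Lemma sumW : \sum_(j < n2) (Kc j ^+ 2 - Kc j) / Mc j <= n1%:R.
Proof.
under eq_bigr => j _ do rewrite sq_K mulr_suml.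
under eq_bigr => j _ do under eq_bigr => i _ do rewrite mulr_suml.
rewrite (eq_bigr (fun j => \sum_(i < n1) \sum_(i' < n1) ff i j * ff i' j * nw i i' / al i)); last first.
  move=> j _; apply: eq_bigr => i _; apply: eq_bigr => i' _.
  rewrite /ff; case: (ee01 i j) => h; first by rewrite h !mul0r.
  rewrite (@Mc_al i j) //.
  by move: h; rewrite /ee; case: eqP => [//|_ /= H]; exfalso; move: H; lra.
rewrite exchange_big.
under eq_bigr => i _ do rewrite exchange_big.
rewrite (_ : n1%:R = \sum_(i < n1) (1:R)); last by rewrite sumr_const card_ord.
apply: ler_sum => i _.
have hal := al_gt0 i.
apply: le_trans (_ : \sum_(i' < n1) (c (inl i') == c (inl i))%:R / al i <= _).
  apply: ler_sum => i' _.
  rewrite -mulr_suml ler_pdivrMr // divfK; last by rewrite gt_eqF.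
  rewrite (eq_bigr (fun j => nw i i' * (ff i j * ff i' j))); last by move=> j _; ring.
  by rewrite -mulr_sumr; apply: ffff_le.
by rewrite -mulr_suml divff // gt_eqF.
Qed.


Lemma cost_bound : (n1 * d)%:R - n2%:R - 2 * n1%:R <= (clust_cost sgn c)%:R :> R.
Proof.
have E1 : (clust_cost sgn c)%:R =
    \sum_(i < n1) \sum_(j < n2) Aw i j - \sum_(j < n2) (2 * Kc j - Mc j) :> R.
  have Ekm : \sum_(j < n2) (2 * Kc j - Mc j) =
      \sum_(i < n1) \sum_(j < n2) (2 * ff i j - ee i j).
    rewrite exchange_big; apply: eq_bigr => j _.
    by rewrite /Kc /Mc mulr_sumr -sumrB.
  rewrite Ekm /clust_cost natr_sum -sumrB; apply: eq_bigr => i _.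
  rewrite natr_sum -sumrB; apply: eq_bigr => j _.
  by rewrite /ff /ee /Aw; case: (sgn i j); case: eqP => _ /=; ring.
have E2 : \sum_(i < n1) \sum_(j < n2) Aw i j = (n1 * d)%:R :> R.
  have E : forall a, \sum_(i < n2) Aw a i = d%:R by move=> a; exact: Hreg1.
  under eq_bigr => a _ do rewrite E.
  by rewrite sumr_const card_ord -[_ *+ n1]mulr_natl natrM.
have E3 : \sum_(j < n2) (2 * Kc j - Mc j) <= n2%:R + 2 * n1%:R.
  apply: (@le_trans _ _ (\sum_(j < n2) (1 + 2 * ((Kc j ^+ 2 - Kc j) / Mc j)))).
    apply: ler_sum => j _; apply: real_step; [exact: Kc_ge0|exact: Kc_le|exact: Mc01].
  rewrite big_split /= sumr_const card_ord -mulr_sumr.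
  have := sumW; rewrite -[1 *+ n2]mulr_natl mulr1; lra.
rewrite E1 E2; lra.
Qed.
End Clust.

Lemma abs_main (delta : R) : (1 < d)%N -> (0 < n1)%N -> 9 <= delta * d%:R ->
  [/\ lp_feasible xs,
      (forall y, lp_feasible y -> lp_value sgn xs <= lp_value sgn y),
      0 < lp_value sgn xs
    & forall c, (3 - delta) * lp_value sgn xs <= (clust_cost sgn c)%:R].
Proof.
move=> hd hn hdel.
have hd' : (2 <= d%:R :> R) by rewrite (ler_nat R 2 d).
have hn' : (1 <= n1%:R :> R) by rewrite (ler_nat R 1 n1).
have hn12 : n2%:R = n1%:R :> R.
  have e1 : \sum_(i < n1) \sum_(j < n2) Aw i j = n1%:R * d%:R.
    have E : forall a, \sum_(i < n2) Aw a i = d%:R by move=> a; exact: Hreg1.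
    under eq_bigr => a _ do rewrite E.
    by rewrite sumr_const card_ord -[_ *+ n1]mulr_natl.
  have e2 : \sum_(i < n1) \sum_(j < n2) Aw i j = n2%:R * d%:R.
    rewrite exchange_big.
    have E : forall a, \sum_(i < n1) Aw i a = d%:R by move=> a; exact: Hreg2.
    under eq_bigr => a _ do rewrite E.
    by rewrite sumr_const card_ord -[_ *+ n2]mulr_natl.
  have : (n2%:R - n1%:R) * d%:R = 0 :> R by rewrite mulrBl -e1 -e2 subrr.
  by move/eqP; rewrite mulf_eq0 subr_eq0 (gt_eqF (_ : 0 < d%:R)) ?orbF => [/eqP|] //; lra.
split.
- exact: xs_feas.
- by move=> y hy; rewrite lp_xs; apply: lp_lower.
- rewrite lp_xs natrM; have : 0 < n1%:R * d%:R :> R by apply: mulr_gt0; lra.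
  lra.
- move=> c; have := cost_bound c; rewrite lp_xs hn12 natrM => hc.
  have hm : 0 <= n1%:R * (delta * d%:R - 9) :> R by apply: mulr_ge0; lra.
  lra.
Qed.

End Abs.

Section Inst.
Variable p : nat.
Variable R : realType.
Local Notation F := 'F_p.
Local Notation PT := (F * F)%type.

Definition Einc (a : PT) (l : PT) : bool := a.2 == l.1 * a.1 + l.2.

Lemma Einc_C4 a a' l l' : a != a' -> l != l' ->
  Einc a l -> Einc a' l -> Einc a l' -> Einc a' l' -> False.
Proof.
case: a a' l l' => [x y] [x' y'] [m b] [m' b'] /=.
rewrite /Einc /= => ha hl /eqP h1 /eqP h2 /eqP h3 /eqP h4.
have e : (m - m') * (x - x') = (m*x+b - (m'*x+b')) - (m*x'+b - (m'*x'+b')) by ring.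
rewrite -h1 -h3 -h2 -h4 !subrr ?subr0 in e.
move/eqP: e; rewrite mulf_eq0 !subr_eq0 => /orP[/eqP hm|/eqP hx].
  subst m'; move: h1; rewrite h3 => /addrI hb; subst b'.
  by move: hl => /negP; apply; apply/eqP.
subst x'; have hy : y = y' by congruence.
by move: ha; rewrite -hy => /negP; apply; apply/eqP.
Qed.

Lemma Einc_reg1 (a : PT) : \sum_(l : PT) ((Einc a l)%:R : R) = #|F|%:R.
Proof.
rewrite -(pair_bigA _ (fun m b => ((Einc a (m, b))%:R : R))) /=.
rewrite -sumr_const; apply: eq_bigr => m _.
rewrite (bigD1 (a.2 - m * a.1)) //= big1.
  by rewrite /Einc /= [m * _ + _]addrC subrK eqxx addr0.
move=> b hb; rewrite /Einc /=.
case: eqP => // h; exfalso; move/eqP: hb; apply; rewrite h; ring.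
Qed.

Lemma Einc_reg2 (l : PT) : \sum_(a : PT) ((Einc a l)%:R : R) = #|F|%:R.
Proof.
rewrite -(pair_bigA _ (fun x y => ((Einc (x, y) l)%:R : R))) /=.
rewrite -sumr_const; apply: eq_bigr => x _.
rewrite (bigD1 (l.1 * x + l.2)) //= big1.
  by rewrite /Einc /= eqxx addr0.
move=> y hy; rewrite /Einc /=.
by rewrite (negbTE hy).
Qed.

End Inst.

Unset Implicit Arguments.
Theorem theorem4 (R : realType) (delta : R) (hdelta : 0 < delta) :
  exists (n1 n2 : nat) (sgn : 'I_n1 -> 'I_n2 -> bool)
         (x : vert n1 n2 -> vert n1 n2 -> R),
    [/\ lp_feasible x,
        (forall y : vert n1 n2 -> vert n1 n2 -> R,
            lp_feasible y -> lp_value sgn x <= lp_value sgn y),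
        0 < lp_value sgn x
      & forall c : vert n1 n2 -> nat,
          (3 - delta) * lp_value sgn x <= (clust_cost sgn c)%:R].
Proof.
have h9 : 0 <= 9 / delta by apply: divr_ge0 => //; lra.
have hB := archi_boundP h9.
case: (prime_above (maxn (Num.Def.archi_bound (9 / delta)) 2)) => p.
rewrite gtn_max => /andP[hBp h2p] pp.
pose sgn := fun (i : 'I_#|{: 'F_p * 'F_p}|) (j : 'I_#|{: 'F_p * 'F_p}|) =>
  Einc (enum_val i) (enum_val j).
exists #|{: 'F_p * 'F_p}|, #|{: 'F_p * 'F_p}|, sgn, (@xs R _ _ sgn).
have cF : #|'F_p| = p by rewrite card_Fp.
apply: (@abs_main R _ _ sgn #|'F_p|).
- move=> i; rewrite /sgn -(big_enum_val (fun j => ((Einc (enum_val i) j)%:R : R))).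
  exact: Einc_reg1.
- move=> j; rewrite /sgn -(big_enum_val (fun i => ((Einc i (enum_val j))%:R : R))).
  exact: Einc_reg2.
- move=> i i' j j' hi hj; rewrite /sgn; apply: Einc_C4.
    by rewrite (inj_eq enum_val_inj).
  by rewrite (inj_eq enum_val_inj).
- by rewrite cF; apply: leq_trans h2p.
- by rewrite card_prod cF muln_gt0 prime_gt0.
- rewrite cF.
  have : (Num.Def.archi_bound (9 / delta))%:R <= p%:R :> R by rewrite ler_nat ltnW.
  move=> hle.
  have : 9 / delta < p%:R by lra.
  by rewrite ltr_pdivrMr // mulrC => /ltW.
Qed.
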